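(* Let $\Sigma$ be a non-empty finite or countably infinite alphabet, $p$ a positive Bernoulli distribution on $\Sigma$, and $A=(Q,\Sigma,\delta,q_s,F)$ a strongly connected DFA with $F\ne\emptyset$. Then there is a real number $b$ with $0<b\le1$ such that for all $\epsilon>0$, $\lim_{n\to\infty}\mu_p(D_n^p(b,\epsilon))=1$.
   Context: $p:\Sigma\to(0,1]$ with $\sum_ap(a)=1$; $\mu_p(a_1\cdots a_n)=\prod_ip(a_i)$, $\mu_p(W)=\sum_{w\in W}\mu_p(w)$. $A_q$ is $A$ with start state $q$; for $w=w_1\cdots w_n$, $A_q[w]$ is the subsequence of those $w_i$ with $\delta^*(q,w_1\cdots w_{i-1})\in F$; $\#_a(v)$ counts occurrences of $a$ in $v$. Define $D_n^p(b,\epsilon,q)=\{w\in\Sigma^n: |A_q[w]|>bn\ \text{and}\ \sup_{a\in\Sigma}|\#_a(A_q[w])/|A_q[w]|-p(a)|<\epsilon\}$ and $D_n^p(b,\epsilon)=\bigcap_{q\in Q}D_n^p(b,\epsilon,q)$. $A$ is strongly connected if its underlying directed graph is strongly connected. *)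

(* Defs.v *)
From HB Require Import structures.
From mathcomp Require Import all_boot all_order all_algebra.
From mathcomp Require Import all_classical all_reals all_analysis.
Set Implicit Arguments. Unset Strict Implicit. Unset Printing Implicit Defensive.
Import Order.TTheory GRing.Theory Num.Theory.
Local Open Scope classical_set_scope.
Local Open Scope ring_scope.

Definition delta_star (Sigma : Type) (Q : Type) (delta : Q -> Sigma -> Q)
  (q : Q) (w : seq Sigma) : Q := foldl delta q w.

Fixpoint Asub (Sigma : Type) (Q : finType) (delta : Q -> Sigma -> Q)
  (F : {set Q}) (q : Q) (w : seq Sigma) : seq Sigma :=
  match w with
  | [::] => [::]
  | a :: w' => if q \in F then a :: Asub delta F (delta q a) w'
               else Asub delta F (delta q a) w'
  end.

Definition strongly_connected (Sigma : Type) (Q : Type)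
  (delta : Q -> Sigma -> Q) : Prop :=
  forall q q' : Q, exists w : seq Sigma, delta_star delta q w = q'.

Definition mu_p (R : realType) (Sigma : countType) (p : Sigma -> R) (n : nat)
  (W : set (n.-tuple Sigma)) : \bar R :=
  (\esum_(w in W) (\prod_(x <- w) p x)%:E)%R.

Definition Dq (R : realType) (Sigma : countType) (p : Sigma -> R)
  (Q : finType) (delta : Q -> Sigma -> Q) (F : {set Q})
  (n : nat) (b eps : R) (q : Q) : set (n.-tuple Sigma) :=
  [set w : n.-tuple Sigma |
     b * (n%:R : R) < ((size (Asub delta F q w))%:R : R) /\
     sup [set `| ((count_mem a (Asub delta F q w))%:R : R)
                 / ((size (Asub delta F q w))%:R : R) - p a | | a in [set: Sigma]]
       < eps].

Arguments Dq {R Sigma} p {Q} delta F n b eps q.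

Definition D (R : realType) (Sigma : countType) (p : Sigma -> R)
  (Q : finType) (delta : Q -> Sigma -> Q) (F : {set Q})
  (n : nat) (b eps : R) : set (n.-tuple Sigma) :=
  \bigcap_(q in [set: Q]) Dq p delta F n b eps q.

Arguments D {R Sigma} p {Q} delta F n b eps.
Arguments mu_p {R Sigma} p {n} W.

(* Main.v *)
Require Import Defs.
From HB Require Import structures.
From mathcomp Require Import all_boot all_order all_algebra.
From mathcomp Require Import all_classical all_reals all_analysis.
From mathcomp Require Import ring lra.
Import Order.TTheory GRing.Theory Num.Theory.
Local Open Scope classical_set_scope.
Local Open Scope ring_scope.
Set Implicit Arguments. Unset Strict Implicit. Unset Printing Implicit Defensive.
Lemma alg_id (R : realType) (a b k c e n : R) : c != 0 -> e != 0 -> n != 0 ->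
  a * (n * k / (c * n / 2) ^+ 2 + b * (n / (e * n) ^+ 2)) =
  a * (4 * k / c ^+ 2 + b / e ^+ 2) / n.
Proof. move=> hc he hn. field. by rewrite hc he hn. Qed.

Section FinEx.
Variables (R : realType) (G : finType) (pG : G -> R).
Hypothesis pG0 : forall g, 0 <= pG g.
Hypothesis pG1 : \sum_g pG g = 1.

Fixpoint Ex (n : nat) (h : seq G -> R) : R :=
  if n is n'.+1 then \sum_g pG g * Ex n' (fun w => h (g :: w)) else h [::].

Lemma Ex_le n (h h' : seq G -> R) :
  (forall w, size w = n -> h w <= h' w) -> Ex n h <= Ex n h'.
Proof.
elim: n h h' => [|n IH] h h' H /=; first exact: H.
apply: ler_sum => g _; apply: ler_wpM2l => //; apply: IH => w sw.
by apply: H; rewrite /= sw.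
Qed.

Lemma Ex_lin n a (h h' : seq G -> R) :
  Ex n (fun w => a * h w + h' w) = a * Ex n h + Ex n h'.
Proof.
elim: n h h' => [|n IH] h h' //=.
rewrite mulr_sumr -big_split /=; apply: eq_bigr => g _.
by rewrite IH; ring.
Qed.

Lemma Ex_ext n (h h' : seq G -> R) :
  (forall w, h w = h' w) -> Ex n h = Ex n h'.
Proof.
move=> H; have -> : h = h' by apply: funext.
by [].
Qed.

Lemma Ex_const n c : Ex n (fun _ => c) = c.
Proof.
elim: n c => [|n IH] c //=.
under eq_bigr do rewrite IH.
by rewrite -mulr_suml pG1 mul1r.
Qed.

Lemma Ex_scale n a (h : seq G -> R) : Ex n (fun w => a * h w) = a * Ex n h.
Proof.
rewrite -[RHS]addr0 -(Ex_const n 0) -Ex_lin.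
by apply: Ex_ext => w; rewrite addr0.
Qed.

Lemma Ex_add n (h h' : seq G -> R) : Ex n (fun w => h w + h' w) = Ex n h + Ex n h'.
Proof.
rewrite -[Ex n h]mul1r -Ex_lin.
by apply: Ex_ext => w; rewrite mul1r.
Qed.

Lemma Ex_sum (I : Type) (r : seq I) n (h : I -> seq G -> R) :
  Ex n (fun w => \sum_(i <- r) h i w) = \sum_(i <- r) Ex n (h i).
Proof.
elim: r => [|i r IH].
  rewrite big_nil -[RHS](Ex_const n 0); apply: Ex_ext => w; by rewrite big_nil.
rewrite big_cons -IH -Ex_add; apply: Ex_ext => w; by rewrite big_cons.
Qed.


Lemma pG_le1 g : pG g <= 1.
Proof.
rewrite -pG1 (bigD1 g) //= lerDl; apply: sumr_ge0 => h _; exact: pG0.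
Qed.

Variables (Q : finType) (d : Q -> G -> Q) (F : {set Q}).

Fixpoint Mx (x : Q -> G -> R) q w :=
  if w is g :: w' then x q g + Mx x (d q g) w' else 0.

Lemma Mx_mean x : (forall q, \sum_g pG g * x q g = 0) ->
  forall n q, Ex n (Mx x q) = 0.
Proof.
move=> h0; elim=> [|n IH] q //=.
rewrite -[RHS](h0 q); apply: eq_bigr => g _; congr (_ * _).
by rewrite Ex_add IH Ex_const addr0.
Qed.

Lemma Mx_sq x B2 : (forall q, \sum_g pG g * x q g = 0) ->
  (forall q g, x q g ^+ 2 <= B2) ->
  forall n q, Ex n (fun w => Mx x q w ^+ 2) <= n%:R * B2.
Proof.
move=> h0 hB; elim=> [|n IH] q /=; first by rewrite mul0r expr0n /= lexx.
have -> : n.+1%:R * B2 = \sum_g pG g * (n.+1%:R * B2).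
  by rewrite -mulr_suml pG1 mul1r.
apply: ler_sum => g _; apply: ler_wpM2l => //.
have -> : Ex n (fun w => (x q g + Mx x (d q g) w) ^+ 2) =
   x q g ^+ 2 + (2 * x q g) * Ex n (Mx x (d q g)) + Ex n (fun w => Mx x (d q g) w ^+ 2).
  rewrite -Ex_scale -(Ex_const n (x q g ^+ 2)) -!Ex_add.
  by apply: Ex_ext => w; ring.
by rewrite Mx_mean // mulr0 addr0 mulrSr mulrDl mul1r addrC lerD //.
Qed.

Lemma Mx_count (J : eqType) (cl : G -> J) j r q w :
  Mx (fun q g => (q \in F)%:R * ((cl g == j)%:R - r)) q w =
  (count (fun g => cl g == j) (Asub d F q w))%:R - r * (size (Asub d F q w))%:R.
Proof.
elim: w q => [|g w IH] q /=; first by rewrite mulr0 subr0.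
rewrite IH; case: (q \in F) => /=; last by rewrite mul0r add0r.
rewrite mul1r natrD -addn1 natrD; case: (cl g == j) => /=; ring.
Qed.

Fixpoint Dn N q : R := if q \in F then 0 else
  if N is N'.+1 then \sum_g pG g * Dn N' (d q g) else 1.

Lemma Dn_F N q : q \in F -> Dn N q = 0.
Proof. by case: N => [|N] /= ->. Qed.

Lemma Dn_01 N q : 0 <= Dn N q <= 1.
Proof.
elim: N q => [|N IH] q /=; case: (q \in F) => //; rewrite ?lexx ?ler01 //.
apply/andP; split; first by apply: sumr_ge0 => g _; rewrite mulr_ge0 // (andP (IH _)).1.
rewrite -pG1; apply: ler_sum => g _; rewrite ler_piMr //; exact: (andP (IH _)).2.
Qed.

Lemma DnSE N q : Dn N.+1 q = if q \in F then 0 else \sum_g pG g * Dn N (d q g).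
Proof. by []. Qed.

Lemma Dn_S N q : Dn N.+1 q <= Dn N q.
Proof.
elim: N q => [|N IH] q.
  rewrite DnSE; case: ifP => qF; rewrite /= qF //.
  rewrite -[X in _ <= X]pG1; apply: ler_sum => g _; rewrite ler_piMr //; by case: ifP.
rewrite DnSE [Dn N.+1 q]DnSE; case: (q \in F) => //.
apply: ler_sum => g _; apply: ler_wpM2l => //; exact: IH.
Qed.

Lemma Dn_mono N N' q : (N <= N')%N -> Dn N' q <= Dn N q.
Proof.
move=> /subnK <-; elim: (N' - N)%N => [|k IH]; first by rewrite add0n.
by rewrite addSn; apply: le_trans (Dn_S _ _) IH.
Qed.

Lemma prod_pG_le1 (u : seq G) : \prod_(g <- u) pG g <= 1.
Proof.
elim: u => [|g u IH]; rewrite ?big_nil ?big_cons //.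
by rewrite mulr_ile1 // ?pG_le1 // prodr_ge0.
Qed.

Lemma Dn_word (u : seq G) : forall q N beta, 0 <= beta ->
  (forall q', Dn N q' <= beta) -> foldl d q u \in F ->
  Dn (N + size u) q <= (1 - \prod_(g <- u) pG g) * beta.
Proof.
elim: u => [|g u IH] q N beta b0 hb /=.
  by move=> qF; rewrite Dn_F // big_nil subrr mul0r.
move=> hu; rewrite addnS DnSE; case: ifP => qF.
  by rewrite mulr_ge0 // subr_ge0 big_cons mulr_ile1 ?pG_le1 ?prod_pG_le1 // prodr_ge0.
rewrite (bigD1 g) //=.
have h1 : Dn (N + size u) (d q g) <= (1 - \prod_(g0 <- u) pG g0) * beta.
  exact: IH.
have h2 : \sum_(i | i != g) pG i * Dn (N + size u) (d q i) <= (1 - pG g) * beta.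
  have -> : 1 - pG g = \sum_(i | i != g) pG i.
    by rewrite -pG1 (bigD1 g) //= addrAC subrr add0r.
  rewrite mulr_suml; apply: ler_sum => i _; apply: ler_wpM2l => //.
  by apply: le_trans (hb _); apply: Dn_mono; rewrite leq_addr.
apply: le_trans (lerD (ler_wpM2l (pG0 g) h1) h2) _.
rewrite big_cons le_eqVlt; apply/orP; left; apply/eqP; ring.
Qed.


Variables (K : nat) (c : R).
Hypothesis hc : 0 < c.
Hypothesis hw : forall q, exists u : seq G,
  foldl d q u \in F /\ (size u <= K)%N /\ c <= \prod_(g <- u) pG g.

Definition T q := \sum_(N < K) Dn N q.
Definition PT q := \sum_g pG g * T (d q g).

Lemma DK_le q : Dn K q <= 1 - c.
Proof.
have [u [hu [su cu]]] := hw q.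
apply: le_trans (Dn_mono q su) _.
have := @Dn_word u q 0%N 1 ler01 (fun q' => (andP (Dn_01 0 q')).2) hu.
rewrite add0n mulr1 => h; apply: le_trans h _; lra.
Qed.

Lemma T_F q : q \in F -> T q = 0.
Proof. by move=> qF; rewrite /T big1 // => N _; rewrite Dn_F. Qed.

Lemma T_bnd q : 0 <= T q <= K%:R.
Proof.
apply/andP; split; first by apply: sumr_ge0 => N _; exact: (andP (Dn_01 _ _)).1.
apply: le_trans (_ : \sum_(N < K) (1 : R) <= _).
  by apply: ler_sum => N _; exact: (andP (Dn_01 _ _)).2.
by rewrite sumr_const card_ord.
Qed.

Lemma PT_bnd q : 0 <= PT q <= K%:R.
Proof.
apply/andP; split; first by apply: sumr_ge0 => g _; rewrite mulr_ge0 // (andP (T_bnd _)).1.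
have -> : (K%:R : R) = \sum_g pG g * K%:R by rewrite -mulr_suml pG1 mul1r.
apply: ler_sum => g _.
by apply: ler_wpM2l => //; exact: (andP (T_bnd _)).2.
Qed.

Lemma PT_notF q : q \notin F -> PT q = T q - 1 + Dn K q.
Proof.
move=> qF; rewrite /PT /T.
under eq_bigr do rewrite mulr_sumr.
rewrite exchange_big /=.
have -> : \sum_(N < K) \sum_g pG g * Dn N (d q g) = \sum_(N < K) Dn N.+1 q.
  by apply: eq_bigr => N _; rewrite DnSE (negbTE qF).
have h1 : \sum_(i < K.+1) Dn i q = Dn 0 q + \sum_(i < K) Dn i.+1 q :=
  big_ord_recl K (fun N => Dn N q).
have h2 : \sum_(i < K.+1) Dn i q = \sum_(i < K) Dn i q + Dn K q :=
  big_ord_recr K (fun N => Dn N q).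
have e0 : Dn 0 q = 1 by rewrite /= (negbTE qF).
rewrite e0 in h1; lra.
Qed.

Definition xphi q g := PT q - T (d q g).

Lemma xphi_mean q : \sum_g pG g * xphi q g = 0.
Proof.
rewrite /xphi; under eq_bigr do rewrite mulrBr.
by rewrite sumrB -mulr_suml pG1 mul1r subrr.
Qed.

Lemma xphi_sq q g : xphi q g ^+ 2 <= K%:R ^+ 2.
Proof.
rewrite /xphi; have /andP[h1 h2] := PT_bnd q; have /andP[h3 h4] := T_bnd (d q g).
nra.
Qed.

Lemma vis_bound w q : c * (size w)%:R <=
  (c + K%:R) * (size (Asub d F q w))%:R - Mx xphi q w + T q - T (foldl d q w).
Proof.
elim: w q => [|g w IH] q /=.
  by rewrite !mulr0 subr0 add0r subrr.
have IH1 := IH (d q g); rewrite /xphi.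
have /andP[h1 h2] := PT_bnd q; have /andP[h3 h4] := T_bnd q.
case qF: (q \in F) => /=.
  rewrite (T_F qF).
  rewrite -addn1 natrD -(addn1 (size (Asub _ _ _ _))) natrD; nra.
have := PT_notF (negbT qF); have := DK_le q.
rewrite -addn1 natrD; nra.
Qed.

Variables (J : finType) (cl : G -> J) (eta : R).

Definition rr j := \sum_(g | cl g == j) pG g.
Definition xj j q g := (q \in F)%:R * ((cl g == j)%:R - rr j).

Lemma rr_01 j : 0 <= rr j <= 1.
Proof.
apply/andP; split; first by apply: sumr_ge0.
rewrite -pG1 [X in _ <= X](bigID (fun g => cl g == j)) /= lerDl.
by apply: sumr_ge0.
Qed.

Lemma xj_mean j q : \sum_g pG g * xj j q g = 0.
Proof.
have -> : \sum_g pG g * xj j q g = \sum_g ((q \in F)%:R * (pG g * (cl g == j)%:R)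
    - ((q \in F)%:R * rr j) * pG g).
  by apply: eq_bigr => g _; rewrite /xj; ring.
rewrite sumrB -!mulr_sumr pG1.
have -> : \sum_g pG g * (cl g == j)%:R = rr j.
  rewrite /rr [RHS]big_mkcond /=; apply: eq_bigr => g _.
  by case: (cl g == j); rewrite ?mulr1 ?mulr0.
ring.
Qed.

Lemma xj_sq j q g : xj j q g ^+ 2 <= 1.
Proof.
rewrite /xj; have /andP[h1 h2] := rr_01 j.
case: (q \in F); case: (cl g == j) => /=; nra.
Qed.

Definition good n w := [forall q, (`|Mx xphi q w| <= c * n%:R / 2) &&
  [forall j, `|Mx (xj j) q w| <= eta * n%:R]].


Definition Sb n w := \sum_q (Mx xphi q w ^+ 2 / (c * n%:R / 2) ^+ 2 +
  \sum_j Mx (xj j) q w ^+ 2 / (eta * n%:R) ^+ 2).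

Lemma Sb_ge0 n w : 0 <= Sb n w.
Proof.
apply: sumr_ge0 => q _; apply: addr_ge0.
  by apply: divr_ge0; apply: sqr_ge0.
by apply: sumr_ge0 => j _; apply: divr_ge0; apply: sqr_ge0.
Qed.

Lemma le_addr_ge0 (x y z : R) : x <= y -> 0 <= z -> x <= y + z.
Proof. lra. Qed.
Lemma le_addl_ge0 (x y z : R) : x <= z -> 0 <= y -> x <= y + z.
Proof. lra. Qed.

Lemma good_pt n w : (0 < n)%N -> 0 < eta -> 1 - Sb n w <= (good n w)%:R.
Proof.
move=> n0 e0; have n0' : 0 < (n%:R : R) by rewrite ltr0n.
case: (boolP (good n w)) => hg.
  by rewrite /= lerBlDr lerDl Sb_ge0.
rewrite /= subr_le0.
move: hg => /forallPn [q]; rewrite negb_and => /orP [h | /forallPn [j h]].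
  rewrite /Sb (bigD1 q) //=; apply: le_addr_ge0; last first.
    apply: sumr_ge0 => q' _; apply: addr_ge0.
      by apply: divr_ge0; apply: sqr_ge0.
    by apply: sumr_ge0 => j _; apply: divr_ge0; apply: sqr_ge0.
  apply: le_addr_ge0; last first.
    by apply: sumr_ge0 => j _; apply: divr_ge0; apply: sqr_ge0.
  have t0 : 0 < c * n%:R / 2 by rewrite divr_gt0 // mulr_gt0.
  rewrite -ltNge in h; rewrite ler_pdivlMr ?exprn_gt0 // mul1r.
  have hM : `|Mx xphi q w| ^+ 2 = Mx xphi q w ^+ 2 := real_normK (num_real _).
  rewrite -hM; have := normr_ge0 (Mx xphi q w); nra.
rewrite /Sb (bigD1 q) //=; apply: le_addr_ge0; last first.
  apply: sumr_ge0 => q' _; apply: addr_ge0.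
    by apply: divr_ge0; apply: sqr_ge0.
  by apply: sumr_ge0 => j' _; apply: divr_ge0; apply: sqr_ge0.
apply: le_addl_ge0; last by apply: divr_ge0; apply: sqr_ge0.
rewrite (bigD1 j) //=; apply: le_addr_ge0; last first.
  by apply: sumr_ge0 => j' _; apply: divr_ge0; apply: sqr_ge0.
have t0 : 0 < eta * n%:R by rewrite mulr_gt0.
rewrite -ltNge in h; rewrite ler_pdivlMr ?exprn_gt0 // mul1r.
have hM : `|Mx (xj j) q w| ^+ 2 = Mx (xj j) q w ^+ 2 := real_normK (num_real _).
rewrite -hM; have := normr_ge0 (Mx (xj j) q w); nra.
Qed.


Lemma good_prob n : (0 < n)%N -> 0 < eta ->
  1 - #|Q|%:R * (4 * K%:R ^+ 2 / c ^+ 2 + #|J|%:R / eta ^+ 2) / n%:R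
  <= Ex n (fun w => (good n w)%:R).
Proof.
move=> n0 e0; have n0' : 0 < (n%:R : R) by rewrite ltr0n.
apply: le_trans (Ex_le (h := fun w => -1 * Sb n w + 1) _); last first.
  by move=> w _; have := good_pt w n0 e0; lra.
rewrite Ex_lin Ex_const /Sb Ex_sum.
set t1 := (c * n%:R / 2) ^+ 2; set t2 := (eta * n%:R) ^+ 2.
have t10 : 0 < t1 by rewrite exprn_gt0 // divr_gt0 // mulr_gt0.
have t20 : 0 < t2 by rewrite exprn_gt0 // mulr_gt0.
have H : \sum_(q <- index_enum Q) Ex n (fun w => Mx xphi q w ^+ 2 / t1 +
      \sum_j Mx (xj j) q w ^+ 2 / t2)
    <= \sum_(q <- index_enum Q) (n%:R * K%:R ^+ 2 / t1 + \sum_(j : J) n%:R / t2).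
  apply: ler_sum => q _; rewrite Ex_add.
  apply: lerD.
    rewrite (@Ex_ext n _ (fun w => t1^-1 * Mx xphi q w ^+ 2)); last by move=> w; rewrite mulrC.
    rewrite Ex_scale mulrC ler_pM2r ?invr_gt0 //.
    by have := @Mx_sq xphi (K%:R ^+ 2) xphi_mean xphi_sq n q.
  rewrite Ex_sum; apply: ler_sum => j _.
  rewrite (@Ex_ext n _ (fun w => t2^-1 * Mx (xj j) q w ^+ 2)); last by move=> w; rewrite mulrC.
  rewrite Ex_scale mulrC ler_pM2r ?invr_gt0 //.
  by have := @Mx_sq (xj j) 1 (xj_mean j) (xj_sq j) n q; rewrite mulr1.
have E : \sum_(q <- index_enum Q) (n%:R * K%:R ^+ 2 / t1 + \sum_(j : J) n%:R / t2)
   = #|Q|%:R * (4 * K%:R ^+ 2 / c ^+ 2 + #|J|%:R / eta ^+ 2) / n%:R.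
  rewrite !sumr_const /t1 /t2.
  have hc0 : c != 0 by rewrite gt_eqF.
  have he0 : eta != 0 by rewrite gt_eqF.
  have hn0 : (n%:R : R) != 0 by rewrite gt_eqF.
  rewrite -alg_id // [RHS]mulr_natl (mulr_natl _ #|J|).
  by [].
rewrite -E; move: H; set S1 := \sum_(q <- _) _; set S2 := \sum_(q <- _) _.
lra.
Qed.


Lemma good_vis n w q : size w = n -> 4 * K%:R < c * n%:R -> good n w ->
  c / (4 * (c + K%:R)) * n%:R < (size (Asub d F q w))%:R.
Proof.
move=> sw hn /forallP /(_ q) /andP [h1 _].
have hv := vis_bound w q; rewrite sw in hv.
have /andP[a1 a2] := T_bnd q; have /andP[a3 a4] := T_bnd (foldl d q w).
move: h1; rewrite ler_norml => /andP [m1 m2].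
have cK : 0 < 4 * (c + K%:R) by rewrite mulr_gt0 // ltr_wpDr.
rewrite mulrAC ltr_pdivrMr //.
have hK : 0 <= (K%:R : R) by [].
nra.
Qed.

Lemma good_cnt n w q j : good n w ->
  `| (count (fun g => cl g == j) (Asub d F q w))%:R - rr j * (size (Asub d F q w))%:R|
   <= eta * n%:R.
Proof.
move=> /forallP /(_ q) /andP [_ /forallP /(_ j)].
by rewrite /xj Mx_count.
Qed.

End FinEx.
Local Open Scope ereal_scope.

Lemma esumZ (R : realType) (T : choiceType) (I : set T) (g : T -> \bar R) (c : R) :
  (0 <= c)%R -> (forall i, 0 <= g i) ->
  \esum_(i in I) (c%:E * g i) = c%:E * \esum_(i in I) g i.
Proof.
move=> c0 g0; rewrite /esum -ereal_supZl //; last first.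
  apply/set0P; exists 0; exists set0; first exact: fsets_set0.
  by rewrite fsbig_set0.
congr ereal_sup; apply/seteqP; split => x /=.
  move=> [A hA <-]; exists (\sum_(i \in A) g i); first by exists A.
  by rewrite ge0_mule_fsumr.
move=> [x0 [A hA <-] <-]; exists A => //.
by rewrite ge0_mule_fsumr.
Qed.

Section Push.
Variables (R : realType) (Sigma : countType) (p : Sigma -> R).
Hypothesis hp : forall a, (0 < p a <= 1)%R.
Hypothesis hsum : \esum_(a in [set: Sigma]) (p a)%:E = 1.
Variables (G : finType) (f : Sigma -> G).

Lemma p_ge0 a : (0 <= p a)%R.
Proof. by have /andP[/ltW] := hp a. Qed.

Lemma esum_sub_bnd (S : set Sigma) :
  0 <= \esum_(a in S) (p a)%:E <= 1.
Proof.
apply/andP; split; first by apply: esum_ge0 => a _; rewrite lee_fin p_ge0.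
rewrite -hsum esum_mkcond; apply: le_esum => a _.
by case: ifP => _ //; rewrite lee_fin p_ge0.
Qed.

Lemma esum_sub_fin (S : set Sigma) :
  \esum_(a in S) (p a)%:E = (fine (\esum_(a in S) (p a)%:E))%:E.
Proof.
have /andP[h1 h2] := esum_sub_bnd S.
rewrite fineK // ge0_fin_numE //; exact: le_lt_trans h2 (ltry _).
Qed.

Definition pf g := fine (\esum_(a in [set a | f a = g]) (p a)%:E).

Lemma pf_ge0 g : (0 <= pf g)%R.
Proof. by rewrite /pf fine_ge0 // (andP (esum_sub_bnd _)).1. Qed.

Lemma esum_part (h : G -> R) : (forall g, 0 <= h g)%R ->
  \esum_(a in [set: Sigma]) (p a * h (f a))%:E = (\sum_g pf g * h g)%:E.
Proof.
move=> h0.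
transitivity (\esum_(a in [set: Sigma]) \sum_(g <- index_enum G)
   (if f a == g then (h g)%:E * (p a)%:E else 0)).
  apply: eq_esum => a _; rewrite (bigD1 (f a)) //= eqxx big1 ?adde0.
    by rewrite -EFinM mulrC.
  by move=> g /negbTE; rewrite eq_sym => ->.
rewrite esum_sum; last first.
  by move=> a g _ _; case: ifP => _ //; rewrite -EFinM lee_fin mulr_ge0 // p_ge0.
rewrite -sumEFin; apply: eq_bigr => g _.
transitivity (\esum_(a in [set: Sigma]) ((h g)%:E * (if f a == g then (p a)%:E else 0))).
  by apply: eq_esum => a _; case: ifP => _; rewrite ?mule0.
rewrite esumZ //; last by move=> a; case: ifP => _ //; rewrite lee_fin p_ge0.
have -> : \esum_(a in [set: Sigma]) (if f a == g then (p a)%:E else 0) =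
          \esum_(a in [set a | f a = g]) (p a)%:E.
  rewrite [RHS]esum_mkcond; apply: eq_esum => a _.
  case: eqP => hh; case: ifP => // h'.
    by move: h' => /negbT/negP; case; apply: mem_set.
  by move: h' => /set_mem.
by rewrite esum_sub_fin -EFinM mulrC.
Qed.

Lemma pf_sum1 : (\sum_g pf g = 1)%R.
Proof.
have := esum_part (h := fun _ => 1%R) (fun _ => ler01).
under eq_esum do rewrite mulr1.
rewrite hsum => /esym /eqP; rewrite eqe => /eqP <-.
by apply: eq_bigr => g _; rewrite mulr1.
Qed.

Lemma p_le_pf a : (p a <= pf (f a))%R.
Proof.
rewrite -lee_fin /pf -esum_sub_fin; apply: esum_ge; exists [set a].
  by split; [exact: finite_set1 | move=> x /= ->].
by rewrite fsbig_set1.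
Qed.

Lemma rr_esum (J : eqType) (cl : G -> J) j :
  (\sum_(g | cl g == j) pf g)%:E =
  \esum_(a in [set: Sigma]) (p a * (cl (f a) == j)%:R)%:E.
Proof.
rewrite (esum_part (h := fun g => (cl g == j)%:R)); last by move=> g; case: (_ == _).
congr EFin; rewrite big_mkcond /=; apply: eq_bigr => g _.
by case: (cl g == j); rewrite ?mulr1 ?mulr0.
Qed.

End Push.

Lemma Ex_ge0 (R : realType) (G : finType) (pG : G -> R) (pG0 : forall g, (0 <= pG g)%R)
  (pG1 : (\sum_g pG g = 1)%R) n (h : seq G -> R) :
  (forall w, 0 <= h w)%R -> (0 <= Ex pG n h)%R.
Proof.
move=> h0; rewrite -(Ex_const pG1 n 0%R); apply: Ex_le => // w _; exact: h0.
Qed.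

Lemma push (R : realType) (Sigma : countType) (p : Sigma -> R)
  (hp : forall a, (0 < p a <= 1)%R)
  (hsum : \esum_(a in [set: Sigma]) (p a)%:E = 1)
  (G : finType) (f : Sigma -> G) n (P : seq G -> bool) :
  mu_p p [set w : n.-tuple Sigma | P (map f w)] =
  (Ex (pf p f) n (fun v => (P v)%:R))%:E.
Proof.
have pge : forall a, (0 <= p a)%R := p_ge0 hp.
elim: n P => [|n IH] P.
  rewrite /mu_p /=; case hP: (P [::]).
    have -> : [set w : 0.-tuple Sigma | P (map f w)] = [set [tuple]].
      by apply/seteqP; split => w /=; rewrite (tuple0 w) /= ?hP.
    by rewrite esum_set1 ?big_nil // lee_fin ler01.
  have -> : [set w : 0.-tuple Sigma | P (map f w)] = set0.
    by apply/seteqP; split => w //=; rewrite (tuple0 w) /= hP.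
  by rewrite esum_set0.
rewrite /mu_p.
pose J := fun a : Sigma => [set w' : n.-tuple Sigma | P (f a :: map f w')].
rewrite (reindex_esum ([set: Sigma] `*`` J) _ (fun x => [tuple of x.1 :: x.2])); last first.
  split.
  - by move=> [a w] /= [_ hw].
  - by move=> [a w] [a2 w2] _ _ /= /(congr1 val) /= [-> /val_inj ->].
  - move=> w /= hw; have e : tval w = thead w :: behead w := congr1 val (tuple_eta w).
    exists (thead w, [tuple of behead w]).
      by split => //=; rewrite /J /=; move: hw; rewrite /= e.
    by apply: val_inj; rewrite /= e.
under eq_esum do rewrite /= big_cons EFinM.
rewrite -(esum_esum (I := [set: Sigma]) (J := J) (a := fun a (w : n.-tuple Sigma) => (p a)%:E * (\prod_(x <- w) p x)%:E)); last first.
  by move=> a w _ _; rewrite -EFinM lee_fin mulr_ge0 ?prodr_ge0.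
under eq_esum => a _.
  rewrite esumZ; [|exact: pge|by move=> w; rewrite lee_fin prodr_ge0].
  have := IH (fun v => P (f a :: v)); rewrite /mu_p => ->.
  rewrite -EFinM.
  over.
rewrite (esum_part hp hsum f (h := fun g => Ex (pf p f) n (fun v => (P (g :: v))%:R))) //.
move=> g; apply: (Ex_ge0 (pf_ge0 hp hsum f) (pf_sum1 hp hsum f)).
by move=> w; case: (P _).
Qed.

Lemma Asub_map (Sigma G : Type) (Q : finType) (delta : Q -> Sigma -> Q)
  (dG : Q -> G -> Q) (f : Sigma -> G) (F : {set Q}) :
  (forall q a, dG q (f a) = delta q a) ->
  forall w q, Asub dG F q (map f w) = map f (Asub delta F q w).
Proof.
move=> h; elim=> [|a w IH] q //=; rewrite h IH; by case: (q \in F).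
Qed.

Lemma foldl_map' (Sigma G Q : Type) (delta : Q -> Sigma -> Q)
  (dG : Q -> G -> Q) (f : Sigma -> G) :
  (forall q a, dG q (f a) = delta q a) ->
  forall w q, foldl dG q (map f w) = foldl delta q w.
Proof. by move=> h; elim=> [|a w IH] q //=; rewrite h IH. Qed.

Lemma mu_mono (R : realType) (Sigma : countType) (p : Sigma -> R)
  (hp0 : forall a, (0 <= p a)%R) n (A B : set (n.-tuple Sigma)) :
  A `<=` B -> mu_p p A <= mu_p p B.
Proof.
move=> AB; rewrite /mu_p esum_mkcond [X in _ <= X]esum_mkcond.
apply: le_esum => w _; case: ifP => hA.
  by rewrite ifT // inE; apply: AB; move: hA; rewrite inE.
by case: ifP => // _; rewrite lee_fin prodr_ge0.
Qed.

Lemma mu_ge0 (R : realType) (Sigma : countType) (p : Sigma -> R)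
  (hp0 : forall a, (0 <= p a)%R) n (A : set (n.-tuple Sigma)) : 0 <= mu_p p A.
Proof. by apply: esum_ge0 => w _; rewrite lee_fin prodr_ge0. Qed.

Lemma dev_bound (R : realType) (C r V eps b n : R) : (0 < V)%R -> (0 <= eps)%R ->
  (b * n < V)%R -> (`|C - r * V| <= b * eps / 4 * n)%R -> (`|C / V - r| <= eps / 4)%R.
Proof.
move=> V0 e0 hb hC.
have -> : (C / V - r = (C - r * V) / V)%R by field; rewrite gt_eqF.
rewrite normrM normfV (gtr0_norm V0) ler_pdivrMr //.
apply: le_trans hC _; nra.
Qed.

Lemma index_eq (T : eqType) (s : seq T) a a0 : a0 \in s ->
  (index a s == index a0 s) = (a == a0).
Proof.
move=> h0; apply/eqP/eqP => [e|-> //].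
have : (index a s < size s)%N by rewrite e index_mem.
rewrite index_mem => ha.
by rewrite -(nth_index a ha) e nth_index.
Qed.

Section Classes.
Variables (R : realType) (Sigma : countType) (p : Sigma -> R).
Hypothesis hp : forall a, (0 < p a <= 1)%R.
Hypothesis hsum : \esum_(a in [set: Sigma]) (p a)%:E = 1.
Variables (G : finType) (f : Sigma -> G) (s : seq Sigma) (cl : G -> 'I_(size s).+1).
Hypothesis hcl : forall a, cl (f a) = inord (index a s).

Let pge := p_ge0 hp.

Lemma cl_eq a a0 : a0 \in s -> (cl (f a) == inord (index a0 s)) = (a == a0).
Proof.
move=> h0; rewrite hcl -val_eqE /= !inordK ?ltnS ?index_size //.
exact: index_eq.
Qed.

Lemma cl_max a : (cl (f a) == ord_max) = (a \notin s).
Proof.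
rewrite hcl -val_eqE /= inordK ?ltnS ?index_size //.
by rewrite -index_mem ltn_neqAle index_size andbT negbK.
Qed.

Lemma R1 a0 : a0 \in s -> rr (pf p f) cl (inord (index a0 s)) = p a0.
Proof.
move=> h0; apply/eqP; rewrite -eqe; apply/eqP.
rewrite /rr (rr_esum hp hsum).
transitivity (\esum_(a in [set: Sigma]) (if a \in [set a0] then (p a)%:E else 0)).
  apply: eq_esum => a _; rewrite cl_eq //.
  case: eqP => [->|ne]; first by rewrite mulr1 ifT // inE.
  by rewrite mulr0 ifF //; apply/negP => /set_mem.
by rewrite -esum_mkcond esum_set1 // lee_fin.
Qed.

Lemma R2 a : a \notin s -> (p a <= rr (pf p f) cl ord_max)%R.
Proof.
move=> ha; rewrite -lee_fin /rr (rr_esum hp hsum).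
apply: esum_ge; exists [set a]; first by split; [exact: finite_set1|].
by rewrite fsbig_set1 cl_max ha mulr1.
Qed.

Lemma R3 (A : set Sigma) (e : R) : finite_set A -> A = [set` s] ->
  (1 - e)%:E < \sum_(i \in A) (p i)%:E -> (rr (pf p f) cl ord_max <= e)%R.
Proof.
move=> fA hs hA.
set E1 := \esum_(a in [set: Sigma]) (p a * (a \notin s)%:R)%:E.
set E2 := \esum_(a in [set: Sigma]) (p a * (a \in s)%:R)%:E.
have e1 : (rr (pf p f) cl ord_max)%:E = E1.
  rewrite /rr (rr_esum hp hsum); apply: eq_esum => a _; by rewrite cl_max.
have e12 : E1 + E2 = 1.
  rewrite -hsum -esumD; last 2 first.
  - by move=> a _; rewrite lee_fin mulr_ge0.
  - by move=> a _; rewrite lee_fin mulr_ge0.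
  apply: eq_esum => a _; rewrite -EFinD; case: (a \in s) => /=; congr EFin; ring.
have e2 : \sum_(i \in A) (p i)%:E <= E2.
  apply: esum_ge; exists A => //.
  rewrite le_eqVlt; apply/orP; left; apply/eqP; apply: eq_fsbigr => i /[!inE] iA.
  by move: iA; rewrite hs /= => ->; rewrite mulr1.
have E1ge : 0 <= E1 by apply: esum_ge0 => a _; rewrite lee_fin mulr_ge0.
have E2ge : 0 <= E2 by apply: esum_ge0 => a _; rewrite lee_fin mulr_ge0.
have E2fin : E2 \is a fin_num.
  rewrite ge0_fin_numE //; apply: (@le_lt_trans _ _ 1); last exact: ltry.
  by rewrite -e12 leeDr.
move: e12 e2 hA E2fin; rewrite -e1.
move=> h1 h2 h3 /fineK e2f; rewrite -e2f in h1 h2.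
move: h1; rewrite -EFinD => /eqP; rewrite eqe => /eqP h1.
have := lt_le_trans h3 h2; rewrite lte_fin; lra.
Qed.

End Classes.
Import numFieldNormedType.Exports.
Local Close Scope ereal_scope.

Unset Implicit Arguments.
Set Strict Implicit.

Theorem lemma5p7 (R : realType) (Sigma : countType) (s0 : Sigma)
  (p : Sigma -> R) (hp : forall a, 0 < p a <= 1)
  (hsum : (\esum_(a in [set: Sigma]) (p a)%:E)%R = 1%E)
  (Q : finType) (delta : Q -> Sigma -> Q) (qs : Q) (F : {set Q})
  (hF : F != finset.set0) (hsc : strongly_connected delta) :
  exists b : R, 0 < b <= 1 /\
    forall eps : R, 0 < eps ->
      (fun n => mu_p p (D p delta F n b eps)) @ \oo --> 1%E.
Proof.
have pge : forall a, (0 <= p a)%R := p_ge0 hp.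
have [qF qFF] : exists qF, qF \in F by apply/set0Pn.
case: (choice (fun q => hsc q qF)) => W hW.
pose K := (\sum_(q : Q) size (W q))%N.
pose c := (\prod_(q : Q) \prod_(a <- W q) p a)%R.
have c0 : (0 < c)%R.
  by apply: prodr_gt0 => q _; apply: prodr_gt0 => a _; case/andP: (hp a).
have c1 : forall q, (c <= \prod_(a <- W q) p a)%R.
  move=> q; rewrite /c (bigD1 q) //= ler_piMr //; first by apply: prodr_ge0.
  apply: prodr_ile1 => q' _; apply/andP; split; first by apply: prodr_ge0.
  by apply: prodr_ile1 => a _; apply/andP; split; [exact: pge | case/andP: (hp a)].
have sK : forall q, (size (W q) <= K)%N by move=> q; rewrite /K (bigD1 q) //= leq_addr.
have K0 : (0 <= (K%:R : R))%R by [].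
pose b := (c / (4 * (c + K%:R)))%R.
have b0 : (0 < b)%R by rewrite divr_gt0 // mulr_gt0 // ltr_wpDr.
exists b; split.
  apply/andP; split => //; rewrite ler_pdivrMr ?mulr_gt0 ?ltr_wpDr //; lra.
move=> eps e0.
have : ((1 - eps / 4)%:E < \esum_(a in [set: Sigma]) (p a)%:E)%E.
  by rewrite hsum lte_fin; lra.
rewrite /esum => /ereal_sup_gt [_ [A [finA _] <-] hA].
have [s hs] := (finite_seqP A).1 finA.
pose G := ({ffun Q -> Q} * 'I_(size s).+1)%type.
pose f := fun a : Sigma => (([ffun q => delta q a], inord (index a s)) : G).
pose dG := fun (q : Q) (g : G) => g.1 q.
pose cl := fun g : G => g.2.
pose pG := pf p f.
have pG0 := pf_ge0 hp hsum f; have pG1 := pf_sum1 hp hsum f.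
have hdG : forall q a, dG q (f a) = delta q a by move=> q a; rewrite /dG /= ffunE.
have hcl : forall a, cl (f a) = inord (index a s) by [].
have hw : forall q, exists u : seq G, foldl dG q u \in F /\ (size u <= K)%N /\
    (c <= \prod_(g <- u) pG g)%R.
  move=> q; exists (map f (W q)); split.
    by rewrite (foldl_map' hdG); have := hW q; rewrite /delta_star => ->.
  split; first by rewrite size_map.
  apply: le_trans (c1 q) _; rewrite big_map; apply: ler_prod => a _.
  by rewrite pge /=; exact: (p_le_pf hp hsum f a).
pose eta := (b * eps / 4)%R.
have eta0 : (0 < eta)%R by rewrite /eta; have := mulr_gt0 b0 e0; lra.
pose N0 := (Num.Def.archi_bound (4 * K%:R / c)).+1.
pose C0 := (#|Q|%:R * (4 * K%:R ^+ 2 / c ^+ 2 + #|'I_(size s).+1|%:R / eta ^+ 2))%R.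
have C00 : (0 <= C0)%R.
  apply: mulr_ge0 => //; apply: addr_ge0; apply: divr_ge0 => //;
    rewrite ?sqr_ge0 //; apply: mulr_ge0 => //; exact: sqr_ge0.
have key : forall n, (N0 <= n)%N -> ((1 - C0 / n%:R)%:E <= mu_p p (D p delta F n b eps))%E.
  move=> n hn.
  have n0 : (0 < n)%N by apply: leq_trans hn.
  have hcn : (4 * K%:R < c * n%:R)%R.
    have h1 := @archi_boundP R (4 * K%:R / c) (divr_ge0 (mulr_ge0 (ler0n _ 4) K0) (ltW c0)).
    have h2 : ((Num.Def.archi_bound (4 * K%:R / c))%:R < (n%:R : R))%R by rewrite ltr_nat.
    by rewrite [c * _]mulrC -ltr_pdivrMr //; apply: lt_trans h1 h2.
  apply: (@le_trans _ _ (mu_p p [set w : n.-tuple Sigma | good pG dG F K c cl eta n (map f w)])).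
    rewrite (push hp hsum f n (fun v => good pG dG F K c cl eta n v)) lee_fin.
    exact: (good_prob pG0 pG1 dG F K c0 cl n0 eta0).
  apply: mu_mono => // w /= hg.
  move=> q _.
  have sw : size (map f w) = n by rewrite size_map size_tuple.
  have AS := Asub_map F hdG (tval w) q.
  have hV := good_vis pG0 pG1 c0 hw q sw hcn hg.
  rewrite AS size_map in hV.
  rewrite /Dq /=.
  move: hV; set L := Asub delta F q w => hV.
  have V0 : (0 < (size L)%:R :> R)%R.
    by apply: le_lt_trans hV; rewrite mulr_ge0 // ltW.
  split; first exact: hV.
  apply: (@le_lt_trans _ _ (eps / 2)); last lra.
  apply: ge_sup.
    by exists (`|(count_mem s0 L)%:R / (size L)%:R - p s0|); exists s0.
  move=> x [a _ <-].
  case: (boolP (a \in s)) => ha.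
    have hc := good_cnt q (inord (index a s)) hg.
    rewrite AS count_map size_map -/L in hc.
    have e : count (preim f (fun g => cl g == inord (index a s))) L = count_mem a L.
      by apply: eq_count => y /=; rewrite (cl_eq hcl y ha).
    rewrite e (R1 hp hsum hcl ha) in hc.
    have := dev_bound V0 (ltW e0) hV hc; lra.
  have hc := good_cnt q ord_max hg; rewrite AS count_map size_map -/L in hc.
  have hk := dev_bound V0 (ltW e0) hV hc.
  have r3 := R3 hp hsum hcl finA hs hA.
  have r2 := R2 hp hsum hcl ha.
  have hcnt : (count_mem a L <= count (preim f (fun g => cl g == ord_max)) L)%N.
    by apply: sub_count => y /= /eqP ->; rewrite (cl_max hcl) ha.
  move: hk hcnt; set Ck := count (preim f _) L => hk hcnt.
  have h1 : ((count_mem a L)%:R / (size L)%:R <= Ck%:R / (size L)%:R :> R)%R.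
    by rewrite ler_pM2r ?invr_gt0 // ler_nat.
  have h0 : (0 <= (count_mem a L)%:R / (size L)%:R :> R)%R by rewrite divr_ge0.
  have pa0 := pge a.
  rewrite ler_norml in hk; case/andP: hk => hk1 hk2.
  rewrite ler_norml; apply/andP; split; lra.
have mu1 : forall n, (mu_p p (D p delta F n b eps) <= 1)%E.
  move=> n; apply: (@le_trans _ _ (mu_p p [set w : n.-tuple Sigma | (fun _ => true) (map f w)])).
    by apply: mu_mono => // w _.
  by rewrite (push hp hsum f n (fun _ => true)) (Ex_const pG1).
have fin : forall n, (mu_p p (D p delta F n b eps) \is a fin_num)%E.
  move=> n; rewrite ge0_fin_numE ?mu_ge0 //; exact: le_lt_trans (mu1 n) (ltry _).
apply/fine_cvgP; split; first by apply: nearW.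
apply: (@squeeze_cvgr _ _ _ _ (fun n => 1 - (2 * C0) * harmonic n) (fun _ => 1)).
- exists N0 => // n /= hn.
  have hk := key n hn; have hm := mu1 n; move: hk hm.
  rewrite -(fineK (fin n)) !lee_fin => hk hm; rewrite hm andbT.
  apply: le_trans hk; rewrite lerD2l lerN2 /=.
  have n0 : (0 < n%:R :> R)%R by rewrite ltr0n; apply: leq_trans hn.
  have hn2 : (n.+1%:R <= 2 * n%:R :> R)%R.
    rewrite -natrM ler_nat mul2n -addnn -addn1 leq_add2l.
    by apply: leq_trans hn.
  have y0 : (0 < n.+1%:R :> R)%R by rewrite ltr0n.
  rewrite ler_pdivrMr //.
  have hy : (n.+1%:R * n.+1%:R^-1 = 1 :> R)%R by rewrite mulfV // gt_eqF.
  have yi0 : (0 < n.+1%:R^-1 :> R)%R by rewrite invr_gt0.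
  move: hy yi0 hn2 n0 y0 C00; set y := n.+1%:R; set yi := y^-1; set x := n%:R.
  move=> hy yi0 hn2 n0 y0 C00.
  have h := ler_wpM2l (mulr_ge0 C00 (ltW yi0)) hn2.
  have e1 : (C0 * yi * y = C0)%R by rewrite -mulrA [yi * y]mulrC hy mulr1.
  rewrite e1 in h; apply: le_trans h _.
  rewrite le_eqVlt; apply/orP; left; apply/eqP; ring.
- rewrite -[X in _ --> X]subr0.
  have hh : (2 * C0 * harmonic n) @[n --> \oo] --> 2 * C0 * 0.
    by apply: cvgMl_tmp; exact: cvg_harmonic.
  rewrite mulr0 in hh.
  apply: cvgB hh; exact: cvg_cst.
- exact: cvg_cst.
Qed.
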